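(* Fix $N\ge 2$. For each integer $E$ with $1\le E\le N(N-1)$, let $m(E)$ be the minimum of the graph entropy $\mathrm{H}_{\mathcal G}[\mathbf Z]$ over all directed graphs without self-loops on $N$ nodes with exactly $E$ edges. Then $m$ is nondecreasing: if $1\le E_1\le E_2\le N(N-1)$ then $m(E_1)\le m(E_2)$. That is, given the number of nodes, a graph with fewer edges has a smaller (or equal) lower bound of graph entropy.
   Context: A directed graph on $N\ge 2$ nodes without self-loops is encoded by a zero-diagonal binary matrix $\mathbf Z=(z_{ij})\in\{0,1\}^{N\times N}$, with $z_{ij}=1$ meaning a directed edge $(i,j)$. The in-degree of node $j$ is $d_j=\sum_{i=1}^N z_{ij}$, and the number of edges is $|\mathcal E|=\sum_{i\ne j} z_{ij}$. For $|\mathcal E|\ge 1$, the graph entropy is $$\mathrm{H}_{\mathcal G}[\mathbf Z]=-\frac{1}{\ln N}\sum_{j=1}^N \frac{d_j}{|\mathcal E|}\ln\frac{d_j}{|\mathcal E|},$$ with the convention $0\ln 0=0$. *)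

(* Defs.v *)
From HB Require Import structures.
From mathcomp Require Import all_boot all_order all_algebra.
From mathcomp Require Import all_classical all_reals all_analysis.
Set Implicit Arguments. Unset Strict Implicit. Unset Printing Implicit Defensive.
Import Order.TTheory GRing.Theory Num.Theory.
Local Open Scope ring_scope.
Local Open Scope classical_set_scope.

(* A directed graph on N nodes: adjacency matrix Z : 'M[bool]_N, Z i j = edge (i,j). *)
Definition no_self_loops (N : nat) (Z : 'M[bool]_N) : Prop :=
  forall i : 'I_N, Z i i = false.

Definition indeg (N : nat) (Z : 'M[bool]_N) (j : 'I_N) : nat :=
  (\sum_(i < N) (Z i j : nat))%N.

Definition nedges (N : nat) (Z : 'M[bool]_N) : nat :=
  (\sum_(i < N) \sum_(j < N | i != j) (Z i j : nat))%N.

Definition xlnx (R : realType) (x : R) : R := if x == 0 then 0 else x * ln x.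

Definition graph_entropy (R : realType) (N : nat) (Z : 'M[bool]_N) : R :=
  - (ln (N%:R : R))^-1 *
    \sum_(j < N) xlnx ((indeg Z j)%:R / (nedges Z)%:R).

(* m(E): the minimum (infimum of a finite nonempty set) of the graph entropy
   over loop-free directed graphs on N nodes with exactly E edges. *)
Definition min_entropy (R : realType) (N E : nat) : R :=
  inf [set graph_entropy R Z | Z in [set Z : 'M[bool]_N | no_self_loops Z /\ nedges Z = E]].

(* Main.v *)
Require Import Defs.
From mathcomp Require Import all_boot all_order all_algebra.
From mathcomp Require Import all_classical all_reals all_analysis.
From mathcomp Require Import ring lra.
Import Order.TTheory GRing.Theory Num.Theory.
Set Implicit Arguments.
Local Open Scope ring_scope.

Lemma ln_le_sub1 (R : realType) (x : R) : 0 < x -> ln x <= x - 1.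
Proof.
move=> x0; have := @le_ln1Dx R (x - 1).
rewrite addrCA subrr addr0; apply; lra.
Qed.

Lemma tangent (R : realType) (x y : R) : 0 < x -> 0 <= y ->
  xlnx x + (ln x + 1) * (y - x) <= xlnx y.
Proof.
move=> x0 y0; rewrite /xlnx (gt_eqF x0).
have [->|yn0] := eqVneq y 0; first by rewrite ?eqxx; lra.
idtac.
have yp : 0 < y by rewrite lt0r yn0 y0.
have H := @ln_le_sub1 R _ (divr_gt0 x0 yp).
rewrite ln_div ?posrE // in H.
have H' : y * (ln x - ln y) <= y * (x / y - 1) by rewrite ler_wpM2l // ltW.
have E : y * (x / y - 1) = x - y by field.
rewrite E in H'.
set lx := ln x in H' *; set ly := ln y in H' *.
have -> : x * lx + (lx + 1) * (y - x) = y * lx + y - x by ring.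
have : y * (lx - ly) = y * lx - y * ly by ring.
lra.
Qed.

Lemma sum_frac1 (R : realType) (N : nat) (d : 'I_N -> nat) :
  (0 < \sum_(i < N) d i)%N ->
  \sum_(i < N) ((d i)%:R / (\sum_(k < N) d k)%:R : R) = 1.
Proof.
move=> Sp; rewrite -mulr_suml -natr_sum divff //.
by rewrite pnatr_eq0 -lt0n.
Qed.

Lemma sum_step (R : realType) (N : nat) (d d' : 'I_N -> nat) (j : 'I_N) :
  (0 < \sum_(i < N) d' i)%N ->
  (\sum_(i < N) d' i <= \sum_(i < N) d i)%N ->
  (0 < d j)%N -> d' j = (d j).-1 ->
  (forall i, i != j -> d' i = d i) ->
  (forall i, (0 < d i)%N -> (d j <= d i)%N) ->
  \sum_(i < N) xlnx ((d i)%:R / (\sum_(k < N) d k)%:R : R) <=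
  \sum_(i < N) xlnx ((d' i)%:R / (\sum_(k < N) d' k)%:R : R).
Proof.
move=> S'p SS dj d'j d'i dmin.
have Sp : (0 < \sum_(i < N) d i)%N by apply: leq_trans S'p SS.
set S := (\sum_(k < N) d k); set S' := (\sum_(k < N) d' k).
have SR : (0 : R) < S%:R by rewrite ltr0n.
have S'R : (0 : R) < S'%:R by rewrite ltr0n.
set P := ((d j)%:R / S%:R : R).
have Pp : 0 < P by rewrite divr_gt0 // ltr0n.
have key : forall i, xlnx ((d i)%:R / S%:R : R) + (ln P + 1) *
   ((d' i)%:R / S'%:R - (d i)%:R / S%:R) <= xlnx ((d' i)%:R / S'%:R : R).
  move=> i; have [->|nij] := eqVneq i j.
    by apply: tangent => //; rewrite divr_ge0 // ler0n.
  rewrite d'i //.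
  have [di0|dip] := posnP (d i).
    by rewrite di0 !mul0r subrr mulr0 addr0.
  have pp : (0 : R) < (d i)%:R / S%:R by rewrite divr_gt0 // ltr0n.
  apply: le_trans (@tangent R _ _ pp _); last by rewrite divr_ge0 // ler0n.
  rewrite lerD2l ler_wpM2r //.
    rewrite subr_ge0 ler_wpM2l // ?ler0n // lef_pV2 ?posrE // ler_nat //.
  rewrite lerD2r ler_ln ?posrE // ler_wpM2r ?invr_ge0 ?ler0n // ler_nat.
  exact: dmin.
have H : \sum_(i < N) (xlnx ((d i)%:R / S%:R : R) + (ln P + 1) *
   ((d' i)%:R / S'%:R - (d i)%:R / S%:R)) <= \sum_(i < N) xlnx ((d' i)%:R / S'%:R : R).
  by apply: ler_sum => i _; exact: key.
move: H; rewrite big_split /= -mulr_sumr sumrB /S /S'.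
by rewrite sum_frac1 // sum_frac1 // subrr mulr0 addr0.
Qed.

Lemma nedges_indeg N (Z : 'M[bool]_N) : no_self_loops Z ->
  nedges Z = (\sum_(j < N) indeg Z j)%N.
Proof.
move=> nl; rewrite /nedges /indeg exchange_big /=.
apply: eq_bigr => i _.
rewrite [RHS](bigD1 i) //= nl add0n; by apply: eq_bigl => k; rewrite eq_sym.
Qed.

Lemma indeg_le N (Z : 'M[bool]_N) j : no_self_loops Z -> (indeg Z j <= nedges Z)%N.
Proof.
move=> nl; rewrite nedges_indeg // (bigD1 j) //=; exact: leq_addr.
Qed.

Definition remove_edge N (Z : 'M[bool]_N) (i j : 'I_N) : 'M[bool]_N :=
  \matrix_(k, l) (Z k l && ~~ ((k == i) && (l == j))).

Lemma remove_edge_prop N (Z : 'M[bool]_N) i j : no_self_loops Z -> Z i j ->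
  [/\ no_self_loops (remove_edge Z i j),
      indeg (remove_edge Z i j) j = (indeg Z j).-1,
      (forall l, l != j -> indeg (remove_edge Z i j) l = indeg Z l) &
      nedges (remove_edge Z i j) = (nedges Z).-1].
Proof.
move=> nl Zij.
have nl' : no_self_loops (remove_edge Z i j) by move=> k; rewrite /remove_edge mxE nl.
have Hj : indeg (remove_edge Z i j) j = (indeg Z j).-1.
  rewrite /indeg [in RHS](bigD1 i) //= [in LHS](bigD1 i) //= Zij /remove_edge mxE !eqxx /=.
  rewrite andbF add0n; apply: eq_bigr => k ki; rewrite mxE (negbTE ki) /=.
  by rewrite andbT.
have Hl : forall l, l != j -> indeg (remove_edge Z i j) l = indeg Z l.
  move=> l lj; rewrite /indeg; apply: eq_bigr => k _.
  by rewrite /remove_edge mxE (negbTE lj) andbF andbT.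
split => //.
rewrite !nedges_indeg // (bigD1 j) //= [in RHS](bigD1 j) //= Hj.
have -> : (\sum_(i0 < N | i0 != j) indeg (remove_edge Z i j) i0 =
   \sum_(i0 < N | i0 != j) indeg Z i0)%N by apply: eq_bigr => l; exact: Hl.
have : (0 < indeg Z j)%N.
  by rewrite /indeg (bigD1 i) //= Zij.
by case: (indeg Z j) => // n _; rewrite addSn.
Qed.

Lemma pos_nedges N (Z : 'M[bool]_N) : no_self_loops Z -> (0 < nedges Z)%N ->
  exists i j, Z i j.
Proof.
move=> nl; rewrite nedges_indeg //.
case: (pickP (fun j => 0 < indeg Z j)%N) => [j Hj _|H0]; last first.
  by rewrite big1 // => j _; move: (H0 j); rewrite lt0n => /negbFE/eqP.
case: (pickP (fun i => Z i j)) => [i Hi|H0]; first by exists i, j.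
by move: Hj; rewrite /indeg big1 // => i _; rewrite H0.
Qed.

Lemma entropy_step (R : realType) N (Z : 'M[bool]_N) : no_self_loops Z ->
  (2 <= nedges Z)%N -> exists Z' : 'M[bool]_N, [/\ no_self_loops Z', nedges Z' = (nedges Z).-1 &
    graph_entropy R Z' <= graph_entropy R Z].
Proof.
move=> nl n2.
have Sp : (0 < \sum_(j < N) indeg Z j)%N by rewrite -nedges_indeg //; apply: leq_trans n2.
case: (pickP (fun j => 0 < indeg Z j)%N) => [j0 Hj0|H0]; last first.
  by move: Sp; rewrite big1 // => j _; move: (H0 j); rewrite lt0n => /negbFE/eqP.
case: (@arg_minnP _ j0 (fun j => 0 < indeg Z j)%N (fun j => indeg Z j) Hj0) => j Hj Hmin.
case: (pickP (fun i => Z i j)) => [i Hi|H0]; last first.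
  by move: Hj; rewrite /indeg big1 // => i _; rewrite H0.
have [nl' Hj' Hl' He'] := @remove_edge_prop N Z i j nl Hi.
exists (remove_edge Z i j); split => //.
rewrite /graph_entropy !mulNr lerN2 ler_wpM2l //.
  rewrite invr_ge0; have [N0|Np] := posnP N; first by rewrite N0 ln0.
  by apply: ln_ge0; rewrite ler1n.
rewrite !nedges_indeg //.
apply: (@sum_step R N (indeg Z) (indeg (remove_edge Z i j)) j) => //.
- by rewrite -nedges_indeg // He' -subn1 subn_gt0.
- by rewrite -!nedges_indeg // He' leq_pred.
Qed.

Lemma entropy_ge0 (R : realType) N (Z : 'M[bool]_N) : no_self_loops Z ->
  (0 < nedges Z)%N -> 0 <= graph_entropy R Z.
Proof.
move=> nl np; rewrite /graph_entropy mulNr oppr_ge0 mulr_ge0_le0 //.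
  rewrite invr_ge0; have [N0|Np] := posnP N; first by rewrite N0 ln0.
  by apply: ln_ge0; rewrite ler1n.
rewrite -oppr_ge0 -sumrN; apply: sumr_ge0 => j _; rewrite oppr_ge0 /xlnx.
case: ifP => // _; apply: mulr_ge0_le0; first by rewrite divr_ge0 // ler0n.
apply: ln_le0; rewrite ler_pdivrMr ?ltr0n // mul1r ler_nat; exact: indeg_le.
Qed.

Lemma exists_graph N E : (E <= N * (N - 1))%N ->
  exists Z : 'M[bool]_N, no_self_loops Z /\ nedges Z = E.
Proof.
move=> HE.
pose K : 'M[bool]_N := \matrix_(i, j) (i != j).
have nlK : no_self_loops K by move=> i; rewrite mxE eqxx.
have nK : nedges K = (N * (N - 1))%N.
  rewrite /nedges (eq_bigr (fun _ => N - 1)%N).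
    by rewrite sum_nat_const card_ord.
  move=> i _; rewrite (eq_bigr (fun _ => 1%N)); last by move=> j ij; rewrite mxE ij.
  rewrite sum1_card (eq_card (B := predC1 i)) ?cardC1 ?card_ord ?subn1 //.
  by move=> j; rewrite !inE eq_sym.
suff H : forall k, (k <= N * (N - 1))%N -> exists Z : 'M[bool]_N,
    no_self_loops Z /\ nedges Z = (N * (N - 1) - k)%N.
  by have [Z [? HZ]] := H _ (leq_subr E (N * (N - 1))); exists Z; rewrite HZ subKn.
elim=> [_|k IH Hk]; first by exists K; rewrite subn0.
have [Z [nl HZ]] := IH (ltnW Hk).
have [i [j Zij]] : exists i j, Z i j by apply: pos_nedges => //; rewrite HZ subn_gt0.
have [nl' _ _ He] := @remove_edge_prop N Z i j nl Zij.
exists (remove_edge Z i j); split; [done | by rewrite He HZ -subnS].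

Qed.

Theorem corollary1 (R : realType) (N E1 E2 : nat) :
  (2 <= N)%N -> (1 <= E1)%N -> (E1 <= E2)%N -> (E2 <= N * (N - 1))%N ->
  min_entropy R N E1 <= min_entropy R N E2.
Proof.
move=> N2 E1p E12 E2M.
have step : forall E, (1 <= E)%N -> (E.+1 <= N * (N - 1))%N ->
    min_entropy R N E <= min_entropy R N E.+1.
  move=> E Ep EM; apply: lb_le_inf.
    have [Z [nl HZ]] := @exists_graph N _ EM.
    by exists (graph_entropy R Z); exists Z.
  move=> y [Z [nl HZ] <-].
  have [Z' [nl' HZ' Hle]] := @entropy_step R N Z nl (ltac:(by rewrite HZ)).
  apply: le_trans Hle; apply: ge_inf; last by exists Z' => //; split => //; rewrite HZ' HZ.
  exists 0 => x [Z'' [nl'' HZ''] <-]; apply: entropy_ge0 => //; by rewrite HZ''.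
move: E2M; rewrite -(subnKC E12).
elim: (E2 - E1)%N => [|n IH] H; first by rewrite addn0.
rewrite addnS in H *; apply: (le_trans (IH (ltnW H))).
apply: step => //; exact: leq_trans E1p (leq_addr _ _).
Qed.
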